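(* Let $\alpha\le N$ and $0<\sigma<N$. There exists $C=C(\Omega,\Sigma,\alpha,\sigma)>0$ such that $$\mathcal N_{\alpha,\sigma}^{-1}(x,y)\le C\big(\mathcal N_{\alpha,\sigma}^{-1}(x,z)+\mathcal N_{\alpha,\sigma}^{-1}(z,y)\big)$$ for all pairwise distinct $x,y,z\in\overline\Omega$.
   Context: $\Omega\subset\mathbb R^N$ ($N\ge3$) is a bounded $C^2$ domain, $\Sigma\subset\partial\Omega$ a compact $C^2$ submanifold without boundary of dimension $k\in\{0,\dots,N-1\}$, $d=\mathrm{dist}(\cdot,\partial\Omega)$, $d_\Sigma=\mathrm{dist}(\cdot,\Sigma)$. For $x,y\in\overline\Omega$, $x\ne y$: $$\mathcal N_{\alpha,\sigma}(x,y):=\frac{\max\{|x-y|,d_\Sigma(x),d_\Sigma(y)\}^\alpha}{|x-y|^{N-\sigma}\max\{|x-y|,d(x),d(y)\}^\sigma},$$ and $\mathcal N^{-1}_{\alpha,\sigma}=1/\mathcal N_{\alpha,\sigma}$. *)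

(* Defs.v *)
From HB Require Import structures.
From mathcomp Require Import all_boot all_order all_algebra.
From mathcomp Require Import all_classical all_reals all_analysis.
Set Implicit Arguments. Unset Strict Implicit. Unset Printing Implicit Defensive.
Import Order.TTheory GRing.Theory Num.Theory.
Import numFieldNormedType.Exports.
Local Open Scope classical_set_scope.
Local Open Scope ring_scope.

Section Defs.
Variable R : realType.

Definition enorm (n : nat) (x : 'rV[R]_n) : R := Num.sqrt (\sum_(i < n) x 0 i ^+ 2).

Definition dist_set (n : nat) (A : set 'rV[R]_n) (x : 'rV[R]_n) : R :=
  inf [set enorm (x - a) | a in A].

Definition bdry (n : nat) (A : set 'rV[R]_n) : set 'rV[R]_n :=
  closure A `\` interior A.

Definition ebasis (m : nat) (i : 'I_m) : 'rV[R]_m := delta_mx 0 i.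
Definition partial (m : nat) (i : 'I_m) (f : 'rV[R]_m -> R) : 'rV[R]_m -> R :=
  fun x => derive f x (ebasis i).

Definition C2fun (m : nat) (f : 'rV[R]_m -> R) : Prop :=
  continuous f /\
  (forall i x, derivable f x (ebasis i)) /\
  (forall i, continuous (partial i f)) /\
  (forall i j x, derivable (partial i f) x (ebasis j)) /\
  (forall i j, continuous (partial j (partial i f))).

(* last coordinate y_N of y in R^N (N > 0) *)
Definition lastcoord (N : nat) (y : 'rV[R]_N) : R :=
  \sum_(i < N | (i : nat) == N.-1) y 0 i.

Definition orthogonal_mx (n : nat) (Q : 'M[R]_n) : Prop := Q *m Q^T = 1%:M.

(* bounded C^2 domain of R^N: nonempty, open, connected, bounded, and locally
   (after a rigid motion) the region above the graph of a C^2 function *)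
Definition C2_domain (N : nat) (Omega : set 'rV[R]_N) : Prop :=
  Omega !=set0 /\ open Omega /\ connected Omega /\ bounded_set Omega /\
  forall x0, bdry Omega x0 ->
    exists (r : R) (Q : 'M[R]_N) (phi : 'rV[R]_N.-1 -> R),
      0 < r /\ orthogonal_mx Q /\ C2fun phi /\
      forall x, enorm (x - x0) < r ->
        (Omega x <->
          let y := (x - x0) *m Q in
          phi (\row_(i < N.-1) y 0 (widen_ord (leq_pred N) i)) < lastcoord y).

(* compact C^2 submanifold (without boundary) of R^N of dimension k (k < N):
   nonempty, compact, and locally the zero set of a C^2 submersion
   F : R^N -> R^(N-k) (Jacobian of rank N-k at the point) *)
Definition C2_submanifold (N k : nat) (S : set 'rV[R]_N) : Prop :=
  forall p, S p ->
    exists (r : R) (F : 'rV[R]_N -> 'rV[R]_(N - k)),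
      0 < r /\ (forall j, C2fun (fun x => F x 0 j)) /\
      \rank (\matrix_(i < N, j < N - k) partial i (fun x => F x 0 j) p) = (N - k)%N /\
      forall x, enorm (x - p) < r -> (S x <-> F x = 0).

Definition compact_C2_submanifold (N k : nat) (S : set 'rV[R]_N) : Prop :=
  S !=set0 /\ compact S /\ C2_submanifold k S.

Definition Nker (N : nat) (Omega Sigma : set 'rV[R]_N) (alpha sigma : R)
    (x y : 'rV[R]_N) : R :=
  let dO := dist_set (bdry Omega) in
  let dS := dist_set Sigma in
  let e := enorm (x - y) in
  (Num.max e (Num.max (dS x) (dS y))) `^ alpha /
  (e `^ (N%:R - sigma) * (Num.max e (Num.max (dO x) (dO y))) `^ sigma).

Definition Nker_inv (N : nat) (Omega Sigma : set 'rV[R]_N) (alpha sigma : R)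
    (x y : 'rV[R]_N) : R := (Nker Omega Sigma alpha sigma x y)^-1.

End Defs.

(* Main.v *)
Require Import Defs.
From HB Require Import structures.
From mathcomp Require Import all_boot all_order all_algebra.
From mathcomp Require Import all_classical all_reals all_analysis.
From mathcomp Require Import ring lra.
Import Order.TTheory GRing.Theory Num.Theory.
Import numFieldNormedType.Exports.
Local Open Scope classical_set_scope.
Local Open Scope ring_scope.

Section S.
Variable R : realType.

Lemma CS n (u v : 'I_n -> R) :
  (\sum_i u i * v i)^+2 <= (\sum_i u i ^+2) * (\sum_i v i ^+2).
Proof.
have H : 0 <= \sum_i \sum_j (u i * v j - u j * v i)^+2.
  by apply: sumr_ge0 => i _; apply: sumr_ge0 => j _; exact: sqr_ge0.
have E : \sum_i \sum_j (u i * v j - u j * v i)^+2 =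
   \sum_i ((u i ^+2) * (\sum_j v j ^+2) + (v i ^+ 2) * (\sum_j u j ^+ 2)
          - (2 * (u i * v i)) * (\sum_j u j * v j)).
  apply: eq_bigr => i _; rewrite !mulr_sumr -big_split -sumrB /=.
  by apply: eq_bigr => j _; ring.
rewrite E sumrB big_split /= -!mulr_suml -mulr_sumr in H.
lra.
Qed.

Lemma enorm_ge0 n (x : 'rV[R]_n) : 0 <= enorm x.
Proof. exact: sqrtr_ge0. Qed.

Lemma enormD n (u v : 'rV[R]_n) : enorm (u + v) <= enorm u + enorm v.
Proof.
rewrite /enorm.
set U := \sum_(i < n) u 0 i ^+ 2; set V := \sum_(i < n) v 0 i ^+ 2.
have U0 : 0 <= U by apply: sumr_ge0 => i _; exact: sqr_ge0.
have V0 : 0 <= V by apply: sumr_ge0 => i _; exact: sqr_ge0.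
have E : \sum_(i < n) (u + v) 0 i ^+ 2 = U + 2 * (\sum_i u 0 i * v 0 i) + V.
  rewrite /U /V mulr_sumr -!big_split /=; apply: eq_bigr => i _.
  rewrite mxE; ring.
have C : \sum_i u 0 i * v 0 i <= Num.sqrt U * Num.sqrt V.
  apply: le_trans (ler_norm _) _.
  rewrite -sqrtr_sqr -sqrtrM //; apply: ler_wsqrtr; exact: CS.
have -> : Num.sqrt U + Num.sqrt V = Num.sqrt ((Num.sqrt U + Num.sqrt V) ^+ 2).
  by rewrite sqrtr_sqr ger0_norm // addr_ge0 // sqrtr_ge0.
apply: ler_wsqrtr; rewrite E.
have h : (Num.sqrt U + Num.sqrt V) ^+ 2 = U + 2 * (Num.sqrt U * Num.sqrt V) + V.
  by rewrite sqrrD !sqr_sqrtr //; ring.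
rewrite h; lra.
Qed.

Lemma enormN n (u : 'rV[R]_n) : enorm (- u) = enorm u.
Proof. by rewrite /enorm; congr Num.sqrt; apply: eq_bigr => i _; rewrite mxE sqrrN. Qed.

Lemma enorm_sym n (x y : 'rV[R]_n) : enorm (x - y) = enorm (y - x).
Proof. by rewrite -enormN opprB. Qed.

Lemma enorm_tri n (x y z : 'rV[R]_n) : enorm (x - y) <= enorm (x - z) + enorm (z - y).
Proof. have -> : x - y = (x - z) + (z - y) by rewrite addrA subrK.
exact: enormD. Qed.

Lemma enorm_gt0 n (x y : 'rV[R]_n) : x != y -> 0 < enorm (x - y).
Proof.
move=> xy; rewrite lt_neqAle enorm_ge0 andbT eq_sym sqrtr_eq0.
apply/negP => H; move/negP: xy; apply; apply/eqP/rowP => i.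
have H0 : \sum_(j < n) (x - y) 0 j ^+ 2 = 0.
  apply/eqP; rewrite eq_le H /=; apply: sumr_ge0 => j _; exact: sqr_ge0.
have := @psumr_eq0P _ _ predT (fun j => (x - y) 0 j ^+ 2) (fun j _ => sqr_ge0 _) H0 i isT.
by move/eqP; rewrite sqrf_eq0 !mxE subr_eq0 => /eqP.
Qed.

Lemma dist_hlb n (A : set 'rV[R]_n) x : has_lbound [set enorm (x - a) | a in A].
Proof. by exists 0 => _ [a _ <-]; exact: enorm_ge0. Qed.

Lemma dist_lip n (A : set 'rV[R]_n) x y : A !=set0 ->
  dist_set A y <= enorm (y - x) + dist_set A x.
Proof.
move=> [a0 Aa0]; rewrite /dist_set -lerBlDl.
apply: lb_le_inf; first by exists (enorm (x - a0)), a0.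
move=> _ [a Aa <-].
have h1 := ge_inf (@dist_hlb _ A y) (ex_intro2 _ _ a Aa erefl).
have h2 := @enorm_tri _ y a x.
rewrite lerBlDl; exact: le_trans h1 h2.
Qed.

Lemma dist_sub n (A B : set 'rV[R]_n) x : A `<=` B -> A !=set0 ->
  dist_set B x <= dist_set A x.
Proof.
move=> AB [a0 Aa0]; rewrite /dist_set.
apply: lb_le_inf; first by exists (enorm (x - a0)), a0.
move=> _ [a Aa <-].
exact: (ge_inf (@dist_hlb _ B x) (ex_intro2 _ _ a (AB _ Aa) erefl)).
Qed.

Lemma maxfacts (x y : R) : x <= Num.max x y /\ y <= Num.max x y /\
  (Num.max x y = x \/ Num.max x y = y).
Proof.
split; first by rewrite le_max lexx. split; first by rewrite le_max lexx orbT.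
by case: (leP x y) => h; [right|left].
Qed.

Lemma lnle (x y : R) : 0 < x -> 0 < y -> x <= y -> ln x <= ln y.
Proof. by move=> x0 y0; rewrite ler_ln ?posrE. Qed.

Lemma lnle2 (x y : R) : 0 < x -> 0 < y -> x <= 2 * y -> ln x <= ln 2 + ln y.
Proof.
move=> x0 y0 h.
have t0 : (0:R) < 2 by lra.
rewrite -lnM ?posrE //.
apply: lnle => //; apply: mulr_gt0 => //.
Qed.

Definition G (n s al e M A : R) := expR ((n - s) * ln e + s * ln M - al * ln A).


Lemma mx_pos (e D : R) : 0 < e -> 0 < Num.max e D.
Proof. move=> e0; have [h _] := maxfacts e D; exact: lt_le_trans e0 h. Qed.

Lemma mx3 (e Dx Dy : R) : 0 < e -> Dy <= Dx + e ->
  Num.max e Dx <= Num.max e (Num.max Dx Dy) /\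
  Num.max e (Num.max Dx Dy) <= 2 * Num.max e Dx.
Proof.
move=> e0 h.
have [i1 [i2 i3]] := maxfacts Dx Dy.
have [k1 [k2 k3]] := maxfacts e (Num.max Dx Dy).
have [p1 [p2 p3]] := maxfacts e Dx.
move: i1 i2 i3 k1 k2 k3 p1 p2 p3.
set m1 := Num.max Dx Dy; set m2 := Num.max e m1; set m3 := Num.max e Dx.
by move=> i1 i2 i3 k1 k2 k3 p1 p2 p3; split; case: i3 => i3; case: k3 => k3; case: p3 => p3; lra.
Qed.

Lemma mx2 (e a D : R) : 0 < e -> e <= 2 * a -> Num.max e D <= 2 * Num.max a D.
Proof.
move=> e0 h.
have [p1 [p2 p3]] := maxfacts e D.
have [q1 [q2 q3]] := maxfacts a D.
move: p1 p2 p3 q1 q2 q3.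
set m1 := Num.max e D; set m2 := Num.max a D.
by move=> p1 p2 p3 q1 q2 q3; case: p3 => p3; case: q3 => q3; lra.
Qed.

Lemma mxmono (e D S : R) : D <= S -> Num.max e D <= Num.max e S.
Proof.
move=> h.
have [p1 [p2 p3]] := maxfacts e D.
have [q1 [q2 q3]] := maxfacts e S.
move: p1 p2 p3 q1 q2 q3.
set m1 := Num.max e D; set m2 := Num.max e S.
by move=> p1 p2 p3 q1 q2 q3; case: p3 => p3; case: q3 => q3; lra.
Qed.

Lemma mxle (e a : R) (D : R) : e <= Num.max e D.
Proof. by have [] := maxfacts e D. Qed.

Lemma mxcase (e a D S : R) : D <= S ->
  Num.max a S <= Num.max e S \/ (Num.max a S = a /\ Num.max a D = a /\ Num.max e S <= a).
Proof.
move=> h.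
have [p1 [p2 p3]] := maxfacts a S.
have [q1 [q2 q3]] := maxfacts e S.
have [r1 [r2 r3]] := maxfacts a D.
move: p1 p2 p3 q1 q2 q3 r1 r2 r3.
set m1 := Num.max a S; set m2 := Num.max e S; set m3 := Num.max a D.
move=> p1 p2 p3 q1 q2 q3 r1 r2 r3.
case: (leP m1 m2) => c; [by left | right].
by case: p3 => p3; case: q3 => q3; case: r3 => r3; split; try lra; split; lra.
Qed.

Lemma core n s al e a Dx Dy Dz Sx Sy Sz : 0 < s -> s < n -> al <= n ->
  0 < e -> 0 < a -> e <= 2 * a -> Dy <= Dx + e -> Sy <= Sx + e ->
  Dz <= Dx + a -> Sz <= Sx + a -> Dx <= Sx ->
  G n s al e (Num.max e (Num.max Dx Dy)) (Num.max e (Num.max Sx Sy)) <=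
  expR ((n + s + 2 * `|al|) * ln 2) *
  G n s al a (Num.max a (Num.max Dx Dz)) (Num.max a (Num.max Sx Sz)).
Proof.
move=> s0 sn aln e0 a0 ea hDy hSy hDz hSz hDS.
rewrite /G -expRD ler_expR.
have [f1 f1'] := mx3 _ _ _ e0 hDy.
have [f2 f2'] := mx3 _ _ _ e0 hSy.
have [f3 f3'] := mx3 _ _ _ a0 hDz.
have [f4 f4'] := mx3 _ _ _ a0 hSz.
have f5 := @mxmono e _ _ hDS.
have f6 := @mx2 e a Dx e0 ea.
have f7 := @mx2 e a Sx e0 ea.
have f6' := @mxmono a _ _ hDS.
have f8 := @mxcase e a _ _ hDS.
have x1 := mxle e a Dx. have x2 := mxle e a Sx.
have x3 := mxle a a Dx. have x4 := mxle a a Sx.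
move: f1 f1' f2 f2' f3 f3' f4 f4' f5 f6 f6' f7 f8 x1 x2 x3 x4.
have P0 := @mx_pos _ Dx e0. have U0 := @mx_pos _ Sx e0.
have Q0 := @mx_pos _ Dx a0. have V0 := @mx_pos _ Sx a0.
have M10 := @mx_pos _ (Num.max Dx Dy) e0. have A10 := @mx_pos _ (Num.max Sx Sy) e0.
have M20 := @mx_pos _ (Num.max Dx Dz) a0. have A20 := @mx_pos _ (Num.max Sx Sz) a0.
move: P0 U0 Q0 V0 M10 A10 M20 A20.
set M1 := Num.max e (Num.max Dx Dy).
set A1 := Num.max e (Num.max Sx Sy).
set M2 := Num.max a (Num.max Dx Dz).
set A2 := Num.max a (Num.max Sx Sz).
set P := Num.max e Dx. set U := Num.max e Sx.
set Q := Num.max a Dx. set V := Num.max a Sx.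
move=> P0 U0 Q0 V0 M10 A10 M20 A20 f1 f1' f2 f2' f3 f3' f4 f4' f5 f6 f6' f7 f8 x1 x2 x3 x4.
have g1 : ln M1 <= ln 2 + ln P by apply: lnle2.
have g2 : ln P <= ln M1 by apply: lnle.
have g3 : ln A1 <= ln 2 + ln U by apply: lnle2.
have g4 : ln U <= ln A1 by apply: lnle.
have g5 : ln M2 <= ln 2 + ln Q by apply: lnle2.
have g6 : ln Q <= ln M2 by apply: lnle.
have g7 : ln A2 <= ln 2 + ln V by apply: lnle2.
have g8 : ln V <= ln A2 by apply: lnle.
have g9 : ln e <= ln P by apply: lnle.
have g10 : ln e <= ln U by apply: lnle.
have g11 : ln P <= ln U by apply: lnle.
have g12 : ln P <= ln 2 + ln Q by apply: lnle2.
have g13 : ln U <= ln 2 + ln V by apply: lnle2.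
have g14 : ln e <= ln 2 + ln a by apply: lnle2.
have l20 : 0 < ln (2:R) by apply: (@ln_gt0 R); lra.
clear f1 f1' f2 f2' f3 f3' f4 f4' f5 f6 f6' f7 x1 x2 x3 x4 hDy hSy hDz hSz hDS ea e0 P0 Q0 M10 A10 M20 A20.
have F1 : 0 <= s * (ln 2 + ln P - ln Q - (ln M1 - ln M2)).
  by apply: mulr_ge0; [exact: ltW | lra].
have F4 : 0 <= (n - s) * (ln 2 + ln a - ln e) by apply: mulr_ge0; lra.
have F5 : 0 <= s * (ln 2 + ln Q - ln P) by apply: mulr_ge0; lra.
have F6 : 0 <= n * ln 2 by apply: mulr_ge0; lra.
have F7 : 0 <= s * ln 2 by apply: mulr_ge0; lra.
case: (leP 0 al) => al0.
- rewrite ger0_norm //.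
  have F2 : 0 <= al * (ln 2 + ln V - ln U - (ln A2 - ln A1)) by apply: mulr_ge0; lra.
  have F3 : 0 <= al * ln 2 by apply: mulr_ge0; lra.
  case: f8 => f8.
  + have g15 : ln V <= ln U by apply: lnle.
    have F9 : 0 <= al * (ln U - ln V) by apply: mulr_ge0 => //; lra.
    clear -F1 F2 F3 F4 F5 F6 F7 F9 s0 sn. lra.
  + case: f8 => Va [Qa Ua].
    have lVU : ln U <= ln a by apply: lnle.
    have F7' : 0 <= (n - s) * (ln U - ln e) by apply: mulr_ge0; lra.
    have F8 : 0 <= s * (ln U - ln P) by apply: mulr_ge0; lra.
    have F9 : 0 <= (n - al) * (ln a - ln U) by apply: mulr_ge0; lra.
    rewrite Va Qa in F1 F2.
    clear -F1 F2 F3 F4 F5 F6 F7 F7' F8 F9 s0 sn. lra.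
- rewrite ltr0_norm //.
  have G1 : 0 <= (- al) * (2 * ln 2 - (ln A1 - ln A2)) by apply: mulr_ge0; lra.
  clear -F1 F4 F5 F6 F7 G1 s0 sn al0 l20. lra.
Qed.

End S.

Arguments G {R}. Arguments enorm_gt0 {R n x y}. Arguments dist_lip {R n A x y}.
Arguments dist_sub {R n A B x}. Arguments core {R n s al e a Dx Dy Dz Sx Sy Sz}.
Arguments mx_pos {R e} D. Arguments enorm_sym {R n}.
Section S3.
Variable R : realType.
Lemma Nker_inv_eq n (Om Sg : set 'rV[R]_n) al s x y : x != y ->
  Nker_inv Om Sg al s x y =
  G n%:R s al (enorm (x - y))
    (Num.max (enorm (x - y)) (Num.max (dist_set (bdry Om) x) (dist_set (bdry Om) y)))
    (Num.max (enorm (x - y)) (Num.max (dist_set Sg x) (dist_set Sg y))).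
Proof.
move=> xy; rewrite /Nker_inv /Nker /G /=.
have e0 := enorm_gt0 xy.
rewrite /powR !gt_eqF ?mx_pos //.
by rewrite -expRD invf_div -expRB.
Qed.

Lemma one_side n (Om Sg : set 'rV[R]_n) al s x y z :
  Sg !=set0 -> Sg `<=` bdry Om -> al <= n%:R -> 0 < s -> s < n%:R ->
  x != y -> x != z -> enorm (x - y) <= 2 * enorm (x - z) ->
  Nker_inv Om Sg al s x y <=
    expR ((n%:R + s + 2 * `|al|) * ln 2) * Nker_inv Om Sg al s x z.
Proof.
move=> Sg0 Sgb aln s0 sn xy xz h.
have Om0 : bdry Om !=set0 by case: Sg0 => p Sp; exists p; exact: Sgb.
rewrite !Nker_inv_eq //.
have h1 := dist_lip (x:=x) (y:=y) Om0.
have h2 := dist_lip (x:=x) (y:=y) Sg0.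
have h3 := dist_lip (x:=x) (y:=z) Om0.
have h4 := dist_lip (x:=x) (y:=z) Sg0.
have h5 := dist_sub (x:=x) Sgb Sg0.
rewrite (enorm_sym y x) in h1 h2.
rewrite (enorm_sym z x) in h3 h4.
rewrite addrC in h1. rewrite addrC in h2. rewrite addrC in h3. rewrite addrC in h4.
exact: (core s0 sn aln (enorm_gt0 xy) (enorm_gt0 xz) h h1 h2 h3 h4 h5).
Qed.

Lemma Nker_inv_ge0 n (Om Sg : set 'rV[R]_n) al s x y : x != y ->
  0 <= Nker_inv Om Sg al s x y.
Proof. by move=> xy; rewrite Nker_inv_eq // expR_ge0. Qed.

Lemma Nker_inv_sym n (Om Sg : set 'rV[R]_n) al s x y : x != y ->
  Nker_inv Om Sg al s x y = Nker_inv Om Sg al s y x.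
Proof.
move=> xy; have yx : y != x by rewrite eq_sym.
rewrite (@Nker_inv_eq n Om Sg al s x y xy) (@Nker_inv_eq n Om Sg al s y x yx) (enorm_sym y x).

have m1 : forall a b : R, Num.max a b = Num.max b a.
  by move=> a b; case: (leP a b) => h1; case: (leP b a) => h2 //; apply/eqP; rewrite eq_le h1 h2.
by rewrite (m1 (dist_set (bdry Om) y)) (m1 (dist_set Sg y)).
Qed.

Theorem lemma5p2' (N k : nat) (Omega Sigma : set 'rV[R]_N)
  (alpha sigma : R) :
  (3 <= N)%N -> C2_domain Omega ->
  (k < N)%N -> compact_C2_submanifold k Sigma -> Sigma `<=` bdry Omega ->
  alpha <= N%:R -> 0 < sigma -> sigma < N%:R ->
  exists C : R, 0 < C /\
    forall x y z : 'rV[R]_N,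
      closure Omega x -> closure Omega y -> closure Omega z ->
      x != y -> y != z -> x != z ->
      Nker_inv Omega Sigma alpha sigma x y <=
        C * (Nker_inv Omega Sigma alpha sigma x z + Nker_inv Omega Sigma alpha sigma z y).
Proof.
move=> _ _ _ [Sg0 _] Sgb aln s0 sn.
exists (expR ((N%:R + sigma + 2 * `|alpha|) * ln 2)); split; first exact: expR_gt0.
move=> x y z _ _ _ xy yz xz.
have zy : z != y by rewrite eq_sym.
have yx : y != x by rewrite eq_sym.
have t := @enorm_tri R _ x y z.
have C0 := expR_gt0 ((N%:R + sigma + 2 * `|alpha|) * ln 2).
case: (leP (enorm (x - y)) (2 * enorm (x - z))) => h.
- have H := @one_side _ Omega Sigma alpha sigma x y z Sg0 Sgb aln s0 sn xy xz h.
  apply: (le_trans H); apply: ler_wpM2l; first exact: ltW.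
  by rewrite lerDl; apply: Nker_inv_ge0.
- have h' : enorm (y - x) <= 2 * enorm (y - z).
    rewrite (enorm_sym y x) (enorm_sym y z).
    move: t h; set e := enorm _; set a := enorm _; set b := enorm _.
    clear; move=> t h; lra.
  have H := @one_side _ Omega Sigma alpha sigma y x z Sg0 Sgb aln s0 sn yx yz h'.
  rewrite (@Nker_inv_sym _ Omega Sigma alpha sigma _ _ xy) (@Nker_inv_sym _ Omega Sigma alpha sigma _ _ zy).
  apply: (le_trans H); apply: ler_wpM2l; first exact: ltW.
  by rewrite lerDr; apply: Nker_inv_ge0.
Qed.

End S3.

Theorem lemma5p2 (R : realType) (N k : nat) (Omega Sigma : set 'rV[R]_N)
  (alpha sigma : R) :
  (3 <= N)%N -> C2_domain Omega ->
  (k < N)%N -> compact_C2_submanifold k Sigma -> Sigma `<=` bdry Omega ->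
  alpha <= N%:R -> 0 < sigma -> sigma < N%:R ->
  exists C : R, 0 < C /\
    forall x y z : 'rV[R]_N,
      closure Omega x -> closure Omega y -> closure Omega z ->
      x != y -> y != z -> x != z ->
      Nker_inv Omega Sigma alpha sigma x y <=
        C * (Nker_inv Omega Sigma alpha sigma x z + Nker_inv Omega Sigma alpha sigma z y).
Proof. exact: lemma5p2'. Qed.
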